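(* For any metric space $(X,d)$, any $p\ge1$, and any $\mu\in\mathcal{P}_{p-1}(X)$, the set $M_p(\mu)\subseteq X$ is closed and bounded.
   Context: $\mathcal{P}_{p-1}(X)$ is the set of Borel probability measures $\mu$ on $(X,d)$ with $\int_X d^{p-1}(x,y)\,d\mu(y)<\infty$ for some (equivalently all) $x\in X$. For such $\mu$, $W_p(\mu,x,x'):=\int_X(d^p(x,y)-d^p(x',y))\,d\mu(y)$ and $M_p(\mu):=\{x\in X: W_p(\mu,x,x')\le0\text{ for all }x'\in X\}$. *)

(* Defs.v *)
From HB Require Import structures.
From mathcomp Require Import all_boot all_order all_algebra.
From mathcomp Require Import all_classical all_reals all_analysis.
Set Implicit Arguments. Unset Strict Implicit. Unset Printing Implicit Defensive.
Import Order.TTheory GRing.Theory Num.Theory.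
Local Open Scope classical_set_scope.
Local Open Scope ring_scope.

Definition is_metric (R : realType) (X : Type) (d : X -> X -> R) : Prop :=
  [/\ (forall x y, 0 <= d x y),
      (forall x y, d x y = 0 <-> x = y),
      (forall x y, d x y = d y x) &
      (forall x y z, d x z <= d x y + d y z)].

Definition d_ball (R : realType) (X : Type) (d : X -> X -> R) (x : X) (r : R)
  : set X := [set y | d x y < r].

Definition d_open (R : realType) (X : Type) (d : X -> X -> R) (U : set X) : Prop :=
  forall x, U x -> exists2 r : R, 0 < r & d_ball d x r `<=` U.

Definition d_closed (R : realType) (X : Type) (d : X -> X -> R) (A : set X) : Prop :=
  d_open d (~` A).

Definition d_bounded (R : realType) (X : Type) (d : X -> X -> R) (A : set X) : Prop :=
  exists r : R, forall x y, A x -> A y -> d x y <= r.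

Definition is_borel_of (R : realType) (dm : measure_display) (X : measurableType dm)
  (d : X -> X -> R) : Prop :=
  (measurable : set (set X)) = <<s [set U | d_open d U] >>.

Definition finite_moment (R : realType) (dm : measure_display) (X : measurableType dm)
  (d : X -> X -> R) (q : R) (mu : probability X R) : Prop :=
  exists x : X, (\int[mu]_y ((d x y) `^ q)%:E < +oo)%E.

Definition W_p (R : realType) (dm : measure_display) (X : measurableType dm)
  (d : X -> X -> R) (p : R) (mu : probability X R) (x x' : X) : \bar R :=
  (\int[mu]_y (((d x y) `^ p - (d x' y) `^ p)%:E))%E.

Definition M_p (R : realType) (dm : measure_display) (X : measurableType dm)
  (d : X -> X -> R) (p : R) (mu : probability X R) : set X :=
  [set x | forall x' : X, (W_p d p mu x x' <= 0)%E].

(* Main.v *)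
Require Import Defs.
From HB Require Import structures.
From mathcomp Require Import all_boot all_order all_algebra.
From mathcomp Require Import all_classical all_reals all_analysis.
From mathcomp Require Import ring lra measurable_realfun.
Import Order.TTheory GRing.Theory Num.Theory.
Local Open Scope classical_set_scope.
Local Open Scope ring_scope.

Lemma powK_pos (R : realType) (p lo hi : R) : 1 <= p -> 0 < lo -> lo <= hi ->
  exists2 c, lo <= c <= hi & hi `^ p - lo `^ p = p * c `^ (p - 1) * (hi - lo).
Proof.
move=> p1 lo0 lohi.
have H1 : forall x, x \in `]lo, hi[ -> is_derive x 1 (fun x => x `^ p) (p * x `^ (p - 1)).
  move=> x; rewrite in_itv /= => /andP[lx _]; exact: is_derive1_powR (lt_trans lo0 lx).
have [|c cI E] := @MVT_segment R (fun x => x `^ p) (fun x => p * x `^ (p - 1)) lo hi lohi H1; last first.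
  by exists c; [rewrite in_itv /= in cI|].
apply: derivable_within_continuous => x xI.
have x0 : 0 < x by apply: lt_le_trans lo0 _; move: xI; rewrite in_itv /= => /andP[].
by have [] := @is_derive1_powR R p x x0.
Qed.

Lemma powK (R : realType) (p a b : R) : 1 <= p -> 0 <= a -> 0 <= b ->
  a `^ p - b `^ p <= p * a `^ (p - 1) * (a - b).
Proof.
move=> p1 a0 b0.
have p0 : 0 < p by apply: lt_le_trans p1.
have [->|an0] := eqVneq a 0.
  rewrite powR0 ?gt_eqF // sub0r add0r mulrN.
  have [->|pn1] := eqVneq p 1.
    by rewrite subrr powRr0 mulr1 mul1r powRr1.
  rewrite powR0 ?mulr0 ?mul0r ?oppr0 ?oppr_le0 ?powR_ge0 //.
  by rewrite subr_eq0.
have [->|bn0] := eqVneq b 0.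
  rewrite powR0 ?gt_eqF // !subr0 -mulrA (mulrC (a `^ _) a) mulr_powRB1 //.
  by rewrite ler_peMl ?powR_ge0.
have a0' : 0 < a by rewrite lt0r an0.
have b0' : 0 < b by rewrite lt0r bn0.
have pa : 0 <= p * a `^ (p - 1) by rewrite mulr_ge0 ?powR_ge0 // ltW.
have q0 : 0 <= p - 1 by rewrite subr_ge0.
have [ab|ba] := leP a b.
  have [c /andP[ac cb] E] := @powK_pos R p _ _ p1 a0' ab.
  have : a `^ p - b `^ p = - (p * c `^ (p - 1) * (b - a)) by rewrite -E opprB.
  move=> ->; rewrite -(opprB b a) mulrN lerN2 ler_wpM2r ?subr_ge0 // ler_wpM2l ?(ltW p0) //.
  by rewrite ge0_ler_powR // nnegrE ltW // (lt_le_trans a0').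
have [c /andP[bc ca] E] := @powK_pos R p _ _ p1 b0' (ltW ba).
rewrite E ler_wpM2r ?subr_ge0 ?(ltW ba) // ler_wpM2l ?(ltW p0) //.
by rewrite ge0_ler_powR // nnegrE ltW // (lt_le_trans b0').
Qed.

Section S.
Context (R : realType) (dm : measure_display) (X : measurableType dm)
  (d : X -> X -> R) (p : R) (mu : probability X R).
Hypotheses (hd : is_metric d) (hb : is_borel_of d) (p1 : 1 <= p).

Lemma open_meas U : d_open d U -> measurable U.
Proof. by move=> oU; rewrite hb; apply: sub_sigma_algebra. Qed.

Lemma dtri x y z : d x z <= d x y + d y z.
Proof. by case: hd. Qed.
Lemma dsym x y : d x y = d y x.
Proof. by case: hd. Qed.
Lemma dge0 x y : 0 <= d x y.
Proof. by case: hd. Qed.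
Lemma dxx x : d x x = 0.
Proof. by case: hd => _ h _ _; apply/h. Qed.

Lemma lip z y y' : `|d z y' - d z y| <= d y y'.
Proof.
have h1 := dtri z y' y; have h2 := dtri z y y'; rewrite (dsym y' y) in h1.
rewrite ler_norml; apply/andP; split; lra.
Qed.

Lemma meas_dist z : measurable_fun setT (d z).
Proof.
apply: (measurability _ (measurable_realfun.RGenOpens.measurableE R)).
move=> _ [B [a [b ->]] <-]; rewrite setTI; apply: open_meas => y /=.
rewrite in_itv /= => /andP[ay yb].
exists (Num.min (d z y - a) (b - d z y)).
  by rewrite lt_min !subr_gt0 ay yb.
move=> y' /=.
rewrite /d_ball /= lt_min => /andP[h1 h2]; rewrite in_itv /=.
have := lip z y y'; rewrite ler_norml => /andP[l1 l2].
apply/andP; split; lra.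
Qed.


Variable x1 : X.
Hypothesis hx1 : (\int[mu]_y ((d x1 y) `^ (p - 1))%:E < +oo)%E.

Definition g z y := d z y `^ (p - 1).
Definition f z y := d z y `^ p.

Lemma q0 : 0 <= p - 1. Proof. by rewrite subr_ge0. Qed.

Lemma meas_pow z s : measurable_fun setT (fun y => d z y `^ s).
Proof. exact: measurableT_comp (measurable_realfun.measurable_powR s) (meas_dist z). Qed.

Lemma int_g1 : mu.-integrable setT (EFin \o g x1).
Proof.
apply/integrableP; split; first exact/measurable_EFinP/meas_pow.
rewrite (eq_integral (fun y => (g x1 y)%:E)) //.
by move=> y _ /=; rewrite ger0_norm // powR_ge0.
Qed.

Lemma g_bound z y : g z y <= 2 `^ (p - 1) * (d z x1 `^ (p - 1) + g x1 y).
Proof.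
rewrite /g; have h := dtri z x1 y.
have u0 := dge0 z x1; have v0 := dge0 x1 y; have w0 := dge0 z y.
have hq := q0.
have [uv|vu] := leP (d z x1) (d x1 y).
  apply: (@le_trans _ _ ((2 * d x1 y) `^ (p - 1))).
    by apply: ge0_ler_powR => //; rewrite ?nnegrE //; [lra|lra].
  rewrite powRM //; rewrite ler_wpM2l ?powR_ge0 // lerDr powR_ge0 //.
apply: (@le_trans _ _ ((2 * d z x1) `^ (p - 1))).
  by apply: ge0_ler_powR => //; rewrite ?nnegrE //; [lra|lra].
rewrite powRM //; rewrite ler_wpM2l ?powR_ge0 // lerDl powR_ge0 //.
Qed.

Lemma int_g z : mu.-integrable setT (EFin \o g z).
Proof.
set k := 2 `^ (p - 1); set c := d z x1 `^ (p - 1).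
have hi : mu.-integrable setT (fun y => k%:E * ((EFin \o cst c) \+ (EFin \o g x1)) y)%E.
  apply: (integrableZl measurableT k); apply: (integrableD measurableT); last exact: int_g1.
  exact: finite_measure_integrable_cst.
apply: (le_integrable measurableT _ _ hi); first exact/measurable_EFinP/meas_pow.
move=> y _ /=; rewrite lee_fin.
rewrite !ger0_norm ?mulr_ge0 ?addr_ge0 ?powR_ge0 //.
exact: g_bound.
Qed.

Lemma e_up x z y : f x y - f z y <= p * d x z * g x y.
Proof.
rewrite /f /g; apply: (le_trans (@powK R p _ _ p1 (dge0 x y) (dge0 z y))).
rewrite mulrAC; apply: ler_wpM2r; first exact: powR_ge0.
apply: ler_wpM2l; first exact: (le_trans _ p1).
have := dtri x z y; lra.
Qed.

Lemma int_e x z : mu.-integrable setT (EFin \o (fun y => f x y - f z y)).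
Proof.
have hi : mu.-integrable setT (fun y => (p * d x z)%:E * ((EFin \o g x) \+ (EFin \o g z)) y)%E.
  exact: (integrableZl measurableT _ (integrableD measurableT (int_g x) (int_g z))).
apply: (le_integrable measurableT _ _ hi).
  by apply/measurable_EFinP; apply: measurable_funB; exact: meas_pow.
move=> y _ /=; rewrite lee_fin.
have pp : 0 <= p by apply: le_trans p1.
rewrite [X in _ <= X]ger0_norm ?mulr_ge0 ?addr_ge0 ?powR_ge0 ?dge0 //.
have h1 := e_up x z y; have h2 := e_up z x y; rewrite (dsym z x) in h2.
rewrite ler_norml; apply/andP; split.
  rewrite mulrDr; move: h2; rewrite /g.
  have := mulr_ge0 (mulr_ge0 pp (dge0 x z)) (powR_ge0 (d x y) (p - 1)); lra.
rewrite mulrDr; move: h1; rewrite /g.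
have := mulr_ge0 (mulr_ge0 pp (dge0 x z)) (powR_ge0 (d z y) (p - 1)); lra.
Qed.

Lemma W_eq x z : W_p d p mu x z = (\int[mu]_y (f x y - f z y))%:E.
Proof.
rewrite /W_p /Rintegral fineK //; exact: integrable_fin_num (int_e x z).
Qed.


Lemma int_Zg c z : mu.-integrable setT (EFin \o (fun y => c * g z y)).
Proof. exact: (integrableZl measurableT c (int_g z)). Qed.

Lemma closedM : d_closed d (M_p d p mu).
Proof.
move=> z /= nMz.
have [x' hx'] : exists x', ~ (W_p d p mu z x' <= 0)%E by apply/existsNP.
move: hx'; rewrite W_eq lee_fin => hx'.
set w := \int[mu]_y (f z y - f x' y) in hx'.
have w0 : 0 < w by rewrite ltNge; apply/negP.
set G := \int[mu]_y g z y.
have G0 : 0 <= G by apply: Rintegral_ge0 => y _; exact: powR_ge0.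
have pp : 0 <= p by apply: le_trans p1.
have pG1 : 0 < p * G + 1 by rewrite ltr_wpDl ?mulr_ge0.
exists (w / (p * G + 1)); first exact: divr_gt0.
move=> x /= hx hM; have := hM x'; rewrite W_eq lee_fin; apply/negP; rewrite -ltNge.
have hs : \int[mu]_y (f x y - f x' y) = \int[mu]_y ((f x y - f z y) + (f z y - f x' y)).
  by apply: eq_Rintegral => y _; rewrite addrA subrK.
rewrite hs (RintegralD measurableT (int_e x z) (int_e z x')) -/w.
have hle : \int[mu]_y (- (p * d z x) * g z y) <= \int[mu]_y (f x y - f z y).
  apply: (le_Rintegral measurableT (int_Zg _ z) (int_e x z)).
  by move=> y _; rewrite mulNr lerNl opprB; exact: e_up.
rewrite (RintegralZl _ measurableT (int_g z)) -/G in hle.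
have hr : w / (p * G + 1) * (p * G + 1) = w := divfK (lt0r_neq0 pG1) w.
have hdz : p * G * d z x <= p * G * (w / (p * G + 1)).
  by apply: ler_wpM2l; [exact: mulr_ge0 | exact: ltW].
move: hx; rewrite /d_ball /= => hx.
set r := w / (p * G + 1) in hr hdz hx *.
have r0 : 0 < r by rewrite /r divr_gt0.
rewrite mulrDr mulr1 in hr.
have e1 : p * G * r < w by rewrite -hr mulrC ltrDl.
have e2 : - (p * d z x) * G = - (p * G * d z x) by rewrite mulNr mulrAC.
rewrite e2 in hle.
rewrite -ltrBlDr sub0r; apply: (lt_le_trans _ hle); rewrite ltrN2.
exact: le_lt_trans hdz e1.
Qed.


Definition hh y := 1 + p * g x1 y.
Definition kk r y := hh y * \1_[set y | r <= d x1 y] y.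

Lemma meas_set r : measurable [set y | r <= d x1 y].
Proof.
have := meas_dist x1 measurableT _ (measurable_itv `[r, +oo[).
by rewrite setTI; congr measurable; apply/seteqP; split => y /=; rewrite in_itv /= andbT.
Qed.

Lemma meas_hh : measurable_fun setT hh.
Proof.
apply: measurable_funD; first exact: measurable_cst.
by apply: measurable_funM; [exact: measurable_cst|exact: meas_pow].
Qed.

Lemma int_hh : mu.-integrable setT (EFin \o hh).
Proof.
have := integrableD measurableT (finite_measure_integrable_cst mu 1 measurableT)
  (integrableZl measurableT p int_g1).
by congr (mu.-integrable _ _); apply/funext => y.
Qed.

Lemma hh_ge0 y : 0 <= hh y.
Proof. by rewrite addr_ge0 ?mulr_ge0 ?powR_ge0 // (le_trans _ p1). Qed.

Lemma kk_ge0 r y : 0 <= kk r y.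
Proof. by rewrite /kk indicE mulr_ge0 ?hh_ge0. Qed.

Lemma kk_le r y : kk r y <= hh y.
Proof.
rewrite /kk indicE; have := hh_ge0 y.
by case: (y \in _) => /= h; rewrite ?mulr1 ?mulr0.
Qed.

Lemma meas_kk r : measurable_fun setT (kk r).
Proof. apply: measurable_funM; [exact: meas_hh|exact: measurable_indic (meas_set r)]. Qed.

Lemma int_kk r : mu.-integrable setT (EFin \o kk r).
Proof.
apply: (le_integrable measurableT _ _ int_hh); first exact/measurable_EFinP/meas_kk.
move=> y _ /=; rewrite lee_fin !ger0_norm ?kk_ge0 ?hh_ge0 //; exact: kk_le.
Qed.

Lemma tail : exists n : nat, \int[mu]_y kk n%:R y < 4^-1.
Proof.
have A1 : {ae mu, forall y, setT y -> (fun n => (kk n%:R y)%:E) @ \oo --> 0%E}.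
  apply: aeW => y _; apply: cvg_near_cst; near=> n.
  rewrite /kk indicE memNset ?mulr0 //=; apply/negP; rewrite -ltNge.
  by near: n; exact: nbhs_infty_gtr.
have A2 : {ae mu, forall y n, setT y -> (`|(kk n%:R y)%:E| <= (hh y)%:E)%E}.
  apply: aeW => y n _ /=; rewrite lee_fin !ger0_norm ?kk_ge0 ?hh_ge0 //; exact: kk_le.
have [_ _ h3] := @dominated_convergence _ _ _ mu setT measurableT
  (fun n => EFin \o kk n%:R) (fun _ => 0%E) (EFin \o hh)
  (fun n => (measurable_EFinP _ _).2 (meas_kk n%:R)) (measurable_cst _)
  A1 int_hh A2.
rewrite integral0 in h3.
have q4 : (0:R) < 4^-1 by rewrite invr_gt0.
have [n hn] := filter_ex (cvgr_lt _ (fine_cvg h3) _ q4).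
by exists n.
Unshelve. all: end_near.
Qed.


Lemma int_lin L c r : mu.-integrable setT (EFin \o (fun y => L - c * kk r y)).
Proof.
have := integrableB measurableT (finite_measure_integrable_cst mu L measurableT)
  (integrableZl measurableT c (int_kk r)).
by congr (mu.-integrable _ _); apply/funext => y.
Qed.

Lemma far x r (r0 : 0 <= r) : r + r `^ p + 1 <= d x1 x ->
  let L := (d x1 x - r) `^ p - r `^ p in
  forall y, L - (L + d x1 x) * kk r y <= f x y - f x1 y.
Proof.
move=> DR L y.
have rp0 := powR_ge0 r p.
have Dr : 1 <= d x1 x - r by lra.
have pp : 0 <= p by apply: le_trans p1.
have Lge : d x1 x - r - r `^ p <= L.
  by rewrite /L lerD2r le1r_powR.
have tri := dtri x1 y x; rewrite (dsym y x) in tri.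
have D0 := dge0 x1 x.
have L0 : 0 <= L by lra.
rewrite /kk indicE /=.
case: (boolP (y \in _)) => [/set_mem /= ry|/negP ry].
  rewrite mulr1 /hh.
  have := e_up x1 x y.
  have := mulr_ge0 L0 (mulr_ge0 pp (powR_ge0 (d x1 y) (p - 1))).
  have := mulr_ge0 D0 (mulr_ge0 pp (powR_ge0 (d x1 y) (p - 1))).
  rewrite /g; lra.
have {}ry : d x1 y < r by rewrite ltNge; apply/negP => h; apply: ry; exact/mem_set.
rewrite !mulr0 subr0 /L /f.
have dxy := dge0 x y; have dxy1 := dge0 x1 y.
have h1 : (d x1 x - r) `^ p <= d x y `^ p.
  by apply: ge0_ler_powR => //; [rewrite qualifE /=; lra|lra].
have h2 : d x1 y `^ p <= r `^ p.
  by apply: ge0_ler_powR => //; lra.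
lra.
Qed.

Lemma boundM : d_bounded d (M_p d p mu).
Proof.
have [n hn] := tail; set r : R := n%:R in hn.
have r0 : 0 <= r by rewrite /r ler0n.
set R0 := 3 * (r + r `^ p) + r + 1.
suff H : forall x, M_p d p mu x -> d x1 x <= R0.
  exists (R0 + R0) => x y /H hx /H hy.
  by apply: le_trans (dtri x x1 y) _; rewrite (dsym x x1) lerD.
move=> x Mx; rewrite leNgt; apply/negP => DR.
have := Mx x1; rewrite W_eq lee_fin; apply/negP; rewrite -ltNge.
have rp0 := powR_ge0 r p.
move: DR; rewrite /R0 => DR.
have Dr : r + r `^ p + 1 <= d x1 x by lra.
have Dr' : 1 <= d x1 x - r by lra.
have hf := @far x r r0 Dr; move: hf => /= hf.
set L := (d x1 x - r) `^ p - r `^ p in hf.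
have Lge : d x1 x - r - r `^ p <= L by rewrite /L lerD2r le1r_powR.
have hle : \int[mu]_y (L - (L + d x1 x) * kk r y) <= \int[mu]_y (f x y - f x1 y).
  apply: (le_Rintegral measurableT (int_lin _ _ _) (int_e x x1)).
  by move=> y _; exact: hf.
rewrite (RintegralB measurableT (finite_measure_integrable_cst mu L measurableT) (integrableZl measurableT _ (int_kk r))) in hle.
rewrite Rintegral_cst // in hle.
have m1 : fine (mu [set: X]) = 1 by rewrite probability_setT.
rewrite m1 mulr1 in hle.
rewrite (RintegralZl _ measurableT (int_kk r)) in hle.
set K := \int[mu]_y kk r y in hn hle.
have K0 : 0 <= K by apply: Rintegral_ge0 => y _; exact: kk_ge0.
have D0 := dge0 x1 x.
have hK : (L + d x1 x) * K <= (L + d x1 x) * 4^-1.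
  by apply: ler_wpM2l; [lra|exact: ltW].
apply: lt_le_trans hle; lra.
Qed.

End S.

Theorem corollary3p7 (R : realType) (dm : measure_display) (X : measurableType dm)
  (d : X -> X -> R) (p : R) (mu : probability X R) :
  is_metric d -> is_borel_of d -> 1 <= p -> finite_moment d (p - 1) mu ->
  d_closed d (M_p d p mu) /\ d_bounded d (M_p d p mu).
Proof.
move=> hd hb p1 [x1 hx1]; split.
  exact: (@closedM R dm X d p mu hd hb p1 x1 hx1).
exact: (@boundM R dm X d p mu hd hb p1 x1 hx1).
Qed.
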